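(* Let $C=\sup_{\xi>0}|1-e^{-\xi}|\,|\xi|^{-1}$ and $B=\sup_{0<\xi\le\log 2}|\xi|\,|1-e^{-\xi}|^{-1}$. For probability densities $f,g$ on $\mathbb{N}$ and every $r\ge1$, $$d_r^*(f,g)\le C^r d_r(f,g)\qquad\text{and}\qquad d_r(f,g)\le\max\{2^{r+1},B^rd_r^*(f,g)\}.$$ Moreover, if $M_1(f)=M_1(g)$ and $M_r(f),M_r(g)$ are finite for some $r\in(1,2]$, then $d_r^*(f,g)\le c_r[M_r(f)+M_r(g)]$ for a suitable constant $c_r$ depending only on $r$.
   Context: For a probability density $f$ on $\mathbb{N}$: $\hat f(z)=\sum_vz^vf(v)$, $z\in[0,1]$; $\tilde f(\xi)=\sum_ve^{-\xi v}f(v)$, $\xi>0$; $M_r(f)=\sum_vv^rf(v)$. The metrics are $d_r(f,g)=\sup_{z\in(0,1)}|\hat f(z)-\hat g(z)|/|1-z|^r$ and $d_r^*(f,g)=\sup_{\xi>0}|\tilde f(\xi)-\tilde g(\xi)|/\xi^r$. *)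

(* Defs.v *)
From Stdlib Require Import Reals.
From Coquelicot Require Import Coquelicot.
Open Scope R_scope.

(* real power x^r for x >= 0, with the convention 0^r = 0 (r > 0);
   Stdlib's Rpower 0 r would give 1, so we special-case 0. *)
Definition rpow (x r : R) : R :=
  if Req_EM_T x 0 then 0 else Rpower x r.

Definition prob_density (f : nat -> R) : Prop :=
  (forall v, 0 <= f v) /\ is_series f 1.

Definition gen_fun (f : nat -> R) (z : R) : R := Series (fun v => z ^ v * f v).

Definition lap_fun (f : nat -> R) (xi : R) : R :=
  Series (fun v => exp (- xi * INR v) * f v).

Definition moment (r : R) (f : nat -> R) : R :=
  Series (fun v => rpow (INR v) r * f v).
Definition moment_finite (r : R) (f : nat -> R) : Prop :=
  ex_series (fun v => rpow (INR v) r * f v).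

Definition d_r (r : R) (f g : nat -> R) : Rbar :=
  Lub_Rbar (fun y => exists z, 0 < z < 1 /\
     y = Rabs (gen_fun f z - gen_fun g z) / rpow (Rabs (1 - z)) r).

Definition d_r_star (r : R) (f g : nat -> R) : Rbar :=
  Lub_Rbar (fun y => exists xi, 0 < xi /\
     y = Rabs (lap_fun f xi - lap_fun g xi) / rpow xi r).

Definition C_const : Rbar :=
  Lub_Rbar (fun y => exists xi, 0 < xi /\ y = Rabs (1 - exp (- xi)) / Rabs xi).

Definition B_const : Rbar :=
  Lub_Rbar (fun y => exists xi, 0 < xi <= ln 2 /\ y = Rabs xi / Rabs (1 - exp (- xi))).

Definition Rbar_maximum (a b : Rbar) : Rbar :=
  if Rbar_le_dec a b then b else a.

(* Main.v *)
Require Import Defs.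
From Stdlib Require Import Reals Lra.
From Coquelicot Require Import Coquelicot.
Open Scope R_scope.

Lemma Rbar_mult_pinf (c : R) : 0 < c -> Rbar_mult (Finite c) p_infty = p_infty.
Proof.
intros Hc. unfold Rbar_mult, Rbar_mult'.
destruct (Rle_dec 0 c) as [H|H]; [|lra].
destruct (Rle_lt_or_eq_dec 0 c H) as [H'|H']; [reflexivity|lra].
Qed.

Lemma Rbar_mult_1 (x : Rbar) : Rbar_mult (Finite 1) x = x.
Proof.
destruct x as [x| |]; simpl.
- f_equal; ring.
- apply Rbar_mult_pinf; lra.
- unfold Rbar_mult, Rbar_mult'.
destruct (Rle_dec 0 1) as [H|H]; [|lra].
destruct (Rle_lt_or_eq_dec 0 1 H) as [H'|H']; [reflexivity|lra].
Qed.

Lemma ex_series_Rle (a b : nat -> R) :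
  (forall n, Rabs (a n) <= b n) -> ex_series b -> ex_series a.
Proof. intros H Hb. apply (ex_series_le a b); [exact H|exact Hb]. Qed.

Lemma is_series_Rplus a b la lb : is_series a la -> is_series b lb ->
  is_series (fun n => a n + b n) (la + lb).
Proof. intros Ha Hb. exact (is_series_plus a b la lb Ha Hb). Qed.
Lemma is_series_Rminus a b la lb : is_series a la -> is_series b lb ->
  is_series (fun n => a n - b n) (la - lb).
Proof. intros Ha Hb. exact (is_series_minus a b la lb Ha Hb). Qed.
Lemma is_series_Rscal c a la : is_series a la ->
  is_series (fun n => c * a n) (c * la).
Proof. intros Ha. exact (is_series_scal_l c a la Ha). Qed.

Lemma is_series_Rext (a b : nat -> R) (l : R) :
  (forall n, a n = b n) -> is_series a l -> is_series b l.
Proof. intros H Ha. exact (is_series_ext a b l H Ha). Qed.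

Lemma rpow_pos x r : 0 < x -> rpow x r = Rpower x r.
Proof. intros H. unfold rpow. destruct (Req_EM_T x 0); [lra|reflexivity]. Qed.

Lemma rpow_0 r : rpow 0 r = 0.
Proof. unfold rpow. destruct (Req_EM_T 0 0); [reflexivity|lra]. Qed.

Lemma exp_inv_pos x : exp (- x) * exp x = 1.
Proof. rewrite <- exp_plus. replace (-x + x) with 0 by ring. apply exp_0. Qed.

Lemma exp_upper x : 0 <= x -> exp (- x) <= 1 - x + x ^ 2.
Proof.
intros Hx. pose proof (exp_ineq1_le x). pose proof (exp_inv_pos x).
pose proof (exp_pos (-x)). pose proof (exp_pos x).
set (a := exp (-x)) in *. set (E := exp x) in *.
assert (Hq : 0 < 1 - x + x^2) by nra.
assert (Hm : 0 <= (1 - x + x^2) * (E - (1 + x))) by (apply Rmult_le_pos; lra).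
assert (H3 : 0 <= x^3) by (apply pow_le; lra).
assert (HE: (1 - x + x^2) * E >= 1) by nra.
assert (H4 : 0 <= ((1 - x + x^2) - a) * E) by nra.
destruct (Rle_lt_dec a (1 - x + x^2)) as [h|h]; [exact h|].
assert (((1 - x + x^2) - a) * E < 0) by (apply Rmult_neg_pos; lra). lra.
Qed.

Lemma exp_lower2 x : 0 < x -> exp (- x) * (1 + x) <= 1.
Proof.
intros Hx. pose proof (exp_ineq1_le x). pose proof (exp_inv_pos x).
pose proof (exp_pos (-x)). nra.
Qed.

Lemma exp_pow_INR xi v : exp (- xi * INR v) = exp (- xi) ^ v.
Proof.
induction v as [|v IH]; simpl.
- replace (- xi * 0) with 0 by ring. apply exp_0.
- rewrite <- IH. rewrite <- exp_plus. f_equal. destruct v; simpl; ring.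
Qed.

Lemma lap_gen f xi : lap_fun f xi = gen_fun f (exp (- xi)).
Proof. unfold lap_fun, gen_fun. apply Series_ext. intros v. rewrite exp_pow_INR. reflexivity. Qed.

Lemma gen_bound f z : prob_density f -> 0 <= z <= 1 ->
  ex_series (fun v => z ^ v * f v) /\ 0 <= gen_fun f z <= 1.
Proof.
intros [Hp Hs] Hz.
assert (Hb : forall v, 0 <= z ^ v * f v <= f v).
{ intros v. pose proof (pow_le z v (proj1 Hz)).
  assert (z ^ v <= 1) by (rewrite <- (pow1 v); apply pow_incr; lra).
  specialize (Hp v). split; [apply Rmult_le_pos; lra| nra]. }
assert (Hex : ex_series f) by (exists 1; exact Hs).
assert (He : ex_series (fun v => z ^ v * f v)).
{ apply (ex_series_Rle _ f); [|exact Hex]. intros v. rewrite Rabs_pos_eq; apply Hb. }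
split; [exact He|]. unfold gen_fun. split.
- rewrite <- (Rmult_0_l (Series (fun v => z ^ v * f v))), <- Series_scal_l. apply Series_le; [|exact He].
  intros v; specialize (Hb v); split; lra.
- rewrite <- (is_series_unique f 1 Hs). apply Series_le; [exact Hb|exact Hex].
Qed.

Lemma exp_neg_lt1 xi : 0 < xi -> exp (- xi) < 1.
Proof. intros H. rewrite <- exp_0. apply exp_increasing. lra. Qed.

Lemma C_is_1 : C_const = Finite 1.
Proof.
unfold C_const. apply is_lub_Rbar_unique. split.
- intros y [xi [Hxi ->]]. simpl.
  pose proof (exp_ineq1_le (- xi)). pose proof (exp_neg_lt1 xi Hxi).
  rewrite (Rabs_pos_eq (1 - _)) by lra. rewrite (Rabs_pos_eq xi) by lra.
  replace 1 with (xi * / xi) at 2 by (field; lra).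
  unfold Rdiv. apply Rmult_le_compat_r; [left; apply Rinv_0_lt_compat; lra| lra].
- intros b Hb. destruct b as [b| |]; simpl; auto.
  + destruct (Rle_lt_dec 1 b) as [h|h]; auto. exfalso.
    set (xi := (1 - b) / 2).
    assert (Hxi : 0 < xi) by (unfold xi; lra).
    set (y := Rabs (1 - exp (- xi)) / Rabs xi).
    assert (Hy : Rbar_le (Finite y) (Finite b)) by (apply Hb; exists xi; split; auto).
    simpl in Hy.
    pose proof (exp_upper xi (Rlt_le _ _ Hxi)). pose proof (exp_neg_lt1 xi Hxi).
    assert (Hyx : y * xi = 1 - exp (- xi)).
    { unfold y. rewrite (Rabs_pos_eq (1 - _)) by lra. rewrite (Rabs_pos_eq xi) by lra. field; lra. }
    assert (b < 1 - xi) by (unfold xi; lra).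
    assert (y * xi < (1 - xi) * xi) by (apply Rmult_lt_compat_r; lra).
    assert (xi ^ 2 = xi * xi) by ring. nra.
  + assert (Hy : Rbar_le (Finite (Rabs (1 - exp (- 1)) / Rabs 1)) m_infty)
      by (apply Hb; exists 1; split; auto; lra).
    simpl in Hy. exact Hy.
Qed.

Lemma B_bound_elem xi : 0 < xi -> xi / (1 - exp (- xi)) <= 1 + xi.
Proof.
intros Hxi. pose proof (exp_lower2 xi Hxi). pose proof (exp_neg_lt1 xi Hxi).
apply Rmult_le_reg_r with (1 - exp (- xi)); [lra|].
unfold Rdiv. rewrite Rmult_assoc, Rinv_l by lra. nra.
Qed.

Lemma ln2_pos : 0 < ln 2.
Proof. rewrite <- ln_1. apply ln_increasing; lra. Qed.

Lemma B_fin : exists b, B_const = Finite b /\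
  forall xi, 0 < xi <= ln 2 -> xi / (1 - exp (- xi)) <= b.
Proof.
unfold B_const.
destruct (Lub_Rbar_correct (fun y => exists xi, 0 < xi <= ln 2 /\ y = Rabs xi / Rabs (1 - exp (- xi)))) as [Hub Hlub].
assert (Helem : forall xi, 0 < xi <= ln 2 -> Rabs xi / Rabs (1 - exp (- xi)) = xi / (1 - exp (- xi))).
{ intros xi Hxi. pose proof (exp_neg_lt1 xi (proj1 Hxi)).
  rewrite (Rabs_pos_eq xi) by lra. rewrite (Rabs_pos_eq (1 - _)) by lra. reflexivity. }
assert (Hup : Rbar_le (Lub_Rbar (fun y => exists xi, 0 < xi <= ln 2 /\ y = Rabs xi / Rabs (1 - exp (- xi)))) (Finite (1 + ln 2))).
{ apply Hlub. intros y [xi [Hxi ->]]. simpl. rewrite Helem by exact Hxi.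
  pose proof (B_bound_elem xi (proj1 Hxi)). lra. }
pose proof ln2_pos.
assert (Hlo : Rbar_le (Finite (Rabs (ln 2) / Rabs (1 - exp (- ln 2)))) (Lub_Rbar (fun y => exists xi, 0 < xi <= ln 2 /\ y = Rabs xi / Rabs (1 - exp (- xi))))).
{ apply Hub. exists (ln 2). split; [lra|reflexivity]. }
destruct (Lub_Rbar (fun y => exists xi, 0 < xi <= ln 2 /\ y = Rabs xi / Rabs (1 - exp (- xi)))) as [b| |].
- exists b. split; [reflexivity|]. intros xi Hxi. rewrite <- Helem by exact Hxi.
  apply (Hub (Finite _)). exists xi; split; auto.
- simpl in Hup. contradiction.
- simpl in Hlo. contradiction.
Qed.

Lemma Rbar_le_mult (y0 p P : R) (X : Rbar) : Rbar_le (Finite y0) X -> 0 <= y0 ->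
  0 <= p <= P -> 0 < P -> Rbar_le (Finite (y0 * p)) (Rbar_mult (Finite P) X).
Proof.
intros HX Hy Hp HP. destruct X as [x| |].
- simpl in *. nra.
- rewrite Rbar_mult_pinf by exact HP. simpl. trivial.
- simpl in HX. contradiction.
Qed.

Lemma max_ge_l a b : Rbar_le a (Rbar_maximum a b).
Proof. unfold Rbar_maximum. destruct (Rbar_le_dec a b); [assumption| apply Rbar_le_refl]. Qed.

Lemma max_ge_r a b : Rbar_le b (Rbar_maximum a b).
Proof.
unfold Rbar_maximum. destruct (Rbar_le_dec a b); [apply Rbar_le_refl|].
apply Rbar_lt_le. apply Rbar_not_le_lt. assumption.
Qed.

Lemma Rpower_pos x r : 0 < Rpower x r.
Proof. unfold Rpower. apply exp_pos. Qed.

Lemma Rpower_1_base r : Rpower 1 r = 1.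
Proof. unfold Rpower. rewrite ln_1, Rmult_0_r. apply exp_0. Qed.

Lemma part1a f g r : prob_density f -> prob_density g -> 1 <= r ->
  Rbar_le (d_r_star r f g) (d_r r f g).
Proof.
intros Hf Hg Hr. unfold d_r_star.
destruct (Lub_Rbar_correct (fun y => exists xi, 0 < xi /\
     y = Rabs (lap_fun f xi - lap_fun g xi) / rpow xi r)) as [_ Hl].
apply Hl. intros y [xi [Hxi ->]].
set (z := exp (- xi)).
assert (Hz : 0 < z < 1) by (split; [apply exp_pos| apply exp_neg_lt1; exact Hxi]).
apply Rbar_le_trans with (Finite (Rabs (gen_fun f z - gen_fun g z) / rpow (Rabs (1 - z)) r)).
- simpl. rewrite !lap_gen. fold z.
  rewrite (Rabs_pos_eq (1 - z)) by lra.
  rewrite (rpow_pos xi) by exact Hxi. rewrite (rpow_pos (1 - z)) by lra.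
  unfold Rdiv. apply Rmult_le_compat_l; [apply Rabs_pos|].
  apply Rinv_le_contravar; [apply Rpower_pos|].
  apply Rle_Rpower_l; [lra|]. split; [lra|].
  pose proof (exp_ineq1_le (- xi)). unfold z. lra.
- unfold d_r. destruct (Lub_Rbar_correct (fun y => exists z, 0 < z < 1 /\
     y = Rabs (gen_fun f z - gen_fun g z) / rpow (Rabs (1 - z)) r)) as [Hu _].
  apply Hu. exists z. split; [exact Hz|reflexivity].
Qed.

Lemma part1b f g r : prob_density f -> prob_density g -> 1 <= r ->
  Rbar_le (d_r r f g)
       (Rbar_maximum (Finite (rpow 2 (r + 1)))
                     (Rbar_mult (Finite (rpow (real B_const) r)) (d_r_star r f g))).
Proof.
intros Hf Hg Hr. destruct B_fin as [b [HB Hb]]. rewrite HB. simpl (real (Finite b)).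
unfold d_r at 1.
destruct (Lub_Rbar_correct (fun y => exists z, 0 < z < 1 /\
     y = Rabs (gen_fun f z - gen_fun g z) / rpow (Rabs (1 - z)) r)) as [_ Hl].
apply Hl. intros y [z [Hz ->]].
destruct (gen_bound f z Hf (conj (Rlt_le _ _ (proj1 Hz)) (Rlt_le _ _ (proj2 Hz)))) as [_ Hgf].
destruct (gen_bound g z Hg (conj (Rlt_le _ _ (proj1 Hz)) (Rlt_le _ _ (proj2 Hz)))) as [_ Hgg].
set (A := Rabs (gen_fun f z - gen_fun g z)).
assert (HA : 0 <= A <= 1) by (unfold A; split; [apply Rabs_pos| apply Rabs_le; lra]).
rewrite (Rabs_pos_eq (1 - z)) by lra. rewrite (rpow_pos (1 - z)) by lra.
pose proof (Rpower_pos (1 - z) r) as HP.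
destruct (Rlt_le_dec z (1 / 2)) as [hz|hz].
- eapply Rbar_le_trans; [|apply max_ge_l]. simpl. rewrite (rpow_pos 2) by lra.
  assert (HK : 1 <= Rpower 2 (r + 1) * Rpower (1 - z) r).
  { apply Rle_trans with (Rpower 2 r * Rpower (1 - z) r).
    - rewrite Rpower_mult_distr by lra.
      pose proof (Rle_Rpower_l 1 (2 * (1 - z)) r ltac:(lra) ltac:(lra)) as Hq.
      rewrite Rpower_1_base in Hq. exact Hq.
    - apply Rmult_le_compat_r; [lra|]. apply Rle_Rpower; lra. }
  apply Rmult_le_reg_r with (Rpower (1 - z) r); [exact HP|].
  unfold Rdiv. rewrite Rmult_assoc, Rinv_l by lra. lra.
- set (xi := - ln z).
  assert (Hxi0 : 0 < xi).
  { unfold xi. assert (ln z < 0) by (rewrite <- ln_1; apply ln_increasing; lra). lra. }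
  assert (Hxi1 : xi <= ln 2).
  { unfold xi. pose proof (ln_le (/ 2) z ltac:(lra) ltac:(lra)).
    rewrite ln_Rinv in H by lra. lra. }
  assert (Hexp : exp (- xi) = z) by (unfold xi; rewrite Ropp_involutive; apply exp_ln; lra).
  pose proof (Hb xi (conj Hxi0 Hxi1)) as Hbx. rewrite Hexp in Hbx.
  set (beta := xi / (1 - z)) in *.
  assert (Hbeta : 0 < beta) by (unfold beta; apply Rdiv_lt_0_compat; lra).
  assert (Hmul : Rpower beta r * Rpower (1 - z) r = Rpower xi r).
  { rewrite Rpower_mult_distr by lra. f_equal. unfold beta. field. lra. }
  pose proof (Rpower_pos beta r). pose proof (Rpower_pos xi r).
  replace (A / Rpower (1 - z) r) with ((A / Rpower xi r) * Rpower beta r)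
    by (rewrite <- Hmul; field; lra).
  eapply Rbar_le_trans; [|apply max_ge_r].
  assert (Hbpos : 0 < b) by lra.
  rewrite (rpow_pos b) by exact Hbpos.
  apply Rbar_le_mult.
  + unfold d_r_star. apply (proj1 (Lub_Rbar_correct _)). exists xi. split; [exact Hxi0|].
    rewrite !lap_gen, Hexp, (rpow_pos xi) by exact Hxi0. reflexivity.
  + unfold Rdiv. apply Rmult_le_pos; [lra| left; apply Rinv_0_lt_compat; lra].
  + split; [lra|]. apply Rle_Rpower_l; lra.
  + apply Rpower_pos.
Qed.

Lemma rpow_nonneg x r : 0 <= rpow x r.
Proof. unfold rpow. destruct (Req_EM_T x 0); [lra| left; apply Rpower_pos]. Qed.

Lemma exp_mono a b : a <= b -> exp a <= exp b.
Proof. intros H. destruct (Rle_lt_or_eq_dec a b H) as [h|h]; [left; apply exp_increasing; exact h| rewrite h; lra]. Qed.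

Lemma h_bounds x r : 0 <= x -> 1 < r <= 2 -> 0 <= exp (- x) - 1 + x <= rpow x r.
Proof.
intros Hx Hr. pose proof (exp_ineq1_le (- x)). split; [lra|].
destruct (Req_dec x 0) as [->|Hx0].
{ rewrite rpow_0, Ropp_0, exp_0. lra. }
rewrite rpow_pos by lra.
destruct (Rle_lt_dec x 1) as [h|h].
- pose proof (exp_upper x Hx).
  assert (Hp : x ^ 2 = Rpower x 2).
  { rewrite <- (Rpower_pow 2 x) by lra. f_equal. }
  assert (x ^ 2 <= Rpower x r).
  { rewrite Hp. unfold Rpower. apply exp_mono.
    assert (ln x <= 0) by (rewrite <- ln_1; apply ln_le; lra). nra. }
  lra.
- assert (exp (- x) <= 1) by (rewrite <- exp_0; apply exp_mono; lra).
  assert (x <= Rpower x r).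
  { rewrite <- (Rpower_1 x) at 1 by lra. apply Rle_Rpower; lra. }
  lra.
Qed.

Lemma INR_le_rpow v r : 1 <= r -> INR v <= rpow (INR v) r.
Proof.
intros Hr. destruct v as [|v].
- change (INR 0) with 0. rewrite rpow_0. lra.
- assert (H1 : 1 <= INR (S v)) by (rewrite S_INR; pose proof (pos_INR v); lra).
  rewrite rpow_pos by lra. rewrite <- (Rpower_1 (INR (S v))) at 1 by lra.
  apply Rle_Rpower; lra.
Qed.

Lemma rpow_mult xi v r : 0 < xi -> rpow (xi * INR v) r = Rpower xi r * rpow (INR v) r.
Proof.
intros Hxi. destruct v as [|v].
- change (INR 0) with 0. rewrite Rmult_0_r, rpow_0. ring.
- pose proof (pos_INR v). assert (0 < INR (S v)) by (rewrite S_INR; lra).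
  rewrite !rpow_pos by nra. symmetry. apply Rpower_mult_distr; lra.
Qed.

Lemma moment1_eq f : moment 1 f = Series (fun v => INR v * f v).
Proof.
unfold moment. apply Series_ext. intros v. destruct v as [|v].
- change (INR 0) with 0. rewrite rpow_0. ring.
- pose proof (pos_INR v). assert (0 < INR (S v)) by (rewrite S_INR; lra).
  rewrite rpow_pos, Rpower_1 by lra. reflexivity.
Qed.

Lemma ex_first_moment f r : prob_density f -> 1 <= r -> moment_finite r f ->
  ex_series (fun v => INR v * f v).
Proof.
intros [Hp _] Hr Hm. apply (ex_series_Rle _ _ ) with (2 := Hm). intros v.
pose proof (pos_INR v). specialize (Hp v). pose proof (INR_le_rpow v r Hr).
rewrite Rabs_pos_eq by nra. apply Rmult_le_compat_r; lra.
Qed.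

Lemma ex_lap f xi : prob_density f -> 0 < xi -> ex_series (fun v => exp (- xi * INR v) * f v).
Proof.
intros [Hp Hs] Hxi. apply (ex_series_Rle _ f); [| exists 1; exact Hs].
intros v. pose proof (pos_INR v). specialize (Hp v).
assert (exp (- xi * INR v) <= 1) by (rewrite <- exp_0; apply exp_mono; nra).
pose proof (exp_pos (- xi * INR v)).
rewrite Rabs_pos_eq by nra. nra.
Qed.

Lemma part2 r : 1 < r <= 2 ->
     exists c : R, forall f g : nat -> R,
       prob_density f -> prob_density g ->
       moment 1 f = moment 1 g ->
       moment_finite r f -> moment_finite r g ->
       Rbar_le (d_r_star r f g) (Finite (c * (moment r f + moment r g))).
Proof.
intros Hr. exists 1. intros f g Hf Hg HM Hmf Hmg.
unfold d_r_star. apply (proj2 (Lub_Rbar_correct _)). intros y [xi [Hxi ->]]. simpl.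
pose proof Hf as [Hfp Hfs]. pose proof Hg as [Hgp Hgs].
assert (Hvf := ex_first_moment f r Hf ltac:(lra) Hmf).
assert (Hvg := ex_first_moment g r Hg ltac:(lra) Hmg).
rewrite !moment1_eq in HM.
assert (Hser := is_series_Rplus _ _ _ _
  (is_series_Rminus _ _ _ _
     (is_series_Rminus _ _ _ _ (Series_correct _ (ex_lap f xi Hf Hxi)) (Series_correct _ (ex_lap g xi Hg Hxi)))
     (is_series_Rminus _ _ _ _ Hfs Hgs))
  (is_series_Rscal xi _ _ (is_series_Rminus _ _ _ _ (Series_correct _ Hvf) (Series_correct _ Hvg)))).
set (H := fun v => (exp (- (xi * INR v)) - 1 + xi * INR v) * (f v - g v)).
assert (HS : is_series H (lap_fun f xi - lap_fun g xi)).
{ unfold lap_fun. rewrite HM in Hser. replace (Series (fun v => exp (- xi * INR v) * f v) -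
     Series (fun v => exp (- xi * INR v) * g v)) with
    (Series (fun v => exp (- xi * INR v) * f v) -
     Series (fun v => exp (- xi * INR v) * g v) - (1 - 1) +
     xi * (Series (fun v => INR v * g v) - Series (fun v => INR v * g v))) by ring.
  apply (is_series_Rext _ _ _ ) with (2 := Hser). intros v. unfold H.
  replace (- xi * INR v) with (- (xi * INR v)) by ring. ring. }
set (P := Rpower xi r).
set (Bd := fun v => P * (rpow (INR v) r * f v + rpow (INR v) r * g v)).
assert (HB : is_series Bd (P * (moment r f + moment r g))).
{ apply is_series_Rscal. apply is_series_Rplus; apply Series_correct; assumption. }
assert (Hpt : forall v, Rabs (H v) <= Bd v).
{ intros v. pose proof (pos_INR v). specialize (Hfp v). specialize (Hgp v).
  assert (Hh := h_bounds (xi * INR v) r ltac:(nra) Hr).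
  rewrite rpow_mult in Hh by exact Hxi. fold P in Hh.
  pose proof (rpow_nonneg (INR v) r).
  unfold H, Bd. rewrite Rabs_mult, (Rabs_pos_eq (exp _ - 1 + _)) by lra.
  apply Rle_trans with ((exp (- (xi * INR v)) - 1 + xi * INR v) * (f v + g v)).
  - apply Rmult_le_compat_l; [lra|]. apply Rabs_le. lra.
  - replace (P * (rpow (INR v) r * f v + rpow (INR v) r * g v)) with
      ((P * rpow (INR v) r) * (f v + g v)) by ring.
    apply Rmult_le_compat_r; lra. }
assert (HexB : ex_series Bd) by (eexists; exact HB).
assert (Habs : Rabs (Series H) <= Series (fun v => Rabs (H v))).
{ apply Series_Rabs. apply (ex_series_Rle _ Bd); [|exact HexB].
  intros v. rewrite Rabs_Rabsolu. apply Hpt. }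
assert (Hle : Series (fun v => Rabs (H v)) <= Series Bd).
{ apply Series_le; [|exact HexB]. intros v. split; [apply Rabs_pos| apply Hpt]. }
rewrite (is_series_unique _ _ HB) in Hle.
rewrite <- (is_series_unique _ _ HS).
rewrite rpow_pos by exact Hxi. fold P.
assert (HP : 0 < P) by apply Rpower_pos.
apply Rmult_le_reg_r with P; [exact HP|].
unfold Rdiv. rewrite Rmult_assoc, Rinv_l by lra. lra.
Qed.

Theorem lemmaA5 :
  (forall (f g : nat -> R) (r : R), prob_density f -> prob_density g -> 1 <= r ->
     Rbar_le (d_r_star r f g) (Rbar_mult (Finite (rpow (real C_const) r)) (d_r r f g)) /\
     Rbar_le (d_r r f g)
       (Rbar_maximum (Finite (rpow 2 (r + 1)))
                     (Rbar_mult (Finite (rpow (real B_const) r)) (d_r_star r f g)))) /\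
  (forall r : R, 1 < r <= 2 ->
     exists c : R, forall f g : nat -> R,
       prob_density f -> prob_density g ->
       moment 1 f = moment 1 g ->
       moment_finite r f -> moment_finite r g ->
       Rbar_le (d_r_star r f g) (Finite (c * (moment r f + moment r g)))).
Proof.
split.
- intros f g r Hf Hg Hr. split.
  + rewrite C_is_1. simpl (real (Finite 1)). rewrite rpow_pos, Rpower_1_base by lra.
    rewrite Rbar_mult_1. apply part1a; assumption.
  + apply part1b; assumption.
- exact part2.
Qed.
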